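(* Let $T$ be a finite rooted tree with root $\rho$, vertex set $V$, arc set $A_T$ (arcs directed away from the root) and leaf set $X$. For $j=1,\dots,k$ let $\xi_j$ be a two-state Markov process on $T$ with state space $\{0,1\}$, root distribution $\pi^{(j)}_0,\pi^{(j)}_1>0$, and $2\times 2$ transition matrices $P^{(j)}(r,s)$ on the arcs $(r,s)\in A_T$, and suppose $\det P^{(j)}(r,s)\ge 0$ for every arc $(r,s)$ and every $j$. Suppose the $k$ processes are independent, and let $\boldsymbol{\xi}=(\xi_1,\dots,\xi_k)$ be the corresponding multivariate process with state space $\{0,1\}^k$. Fix a non-empty subset $W\subseteq X$, and for a function $\mathbf{u}\colon W\to\{0,1\}^k$ let $p(\mathbf{u})$ be the probability that $\boldsymbol{\xi}(v)=\mathbf{u}(v)$ for every $v\in W$. Then for any two functions $\mathbf{y},\mathbf{z}\colon W\to\{0,1\}^k$, $$p(\mathbf{y})\,p(\mathbf{z})\le p(\mathbf{y}\vee\mathbf{z})\,p(\mathbf{y}\wedge\mathbf{z}),$$ where $\mathbf{y}\vee\mathbf{z}$ and $\mathbf{y}\wedge\mathbf{z}$ are the functions $W\to\{0,1\}^k$ given coordinatewise by $(\mathbf{y}\vee\mathbf{z})_j(v)=\max\{y_j(v),z_j(v)\}$ and $(\mathbf{y}\wedge\mathbf{z})_j(v)=\min\{y_j(v),z_j(v)\}$ for $v\in W$, $j=1,\dots,k$.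
   Context: A two-state Markov process on a rooted tree $T$ assigns a random state $\xi(v)\in\{0,1\}$ to each vertex: $\xi(\rho)=i$ with probability $\pi_i$, and for each arc $(r,s)$ the entry $P(r,s)_{il}$ is the conditional probability that $\xi(s)=l$ given $\xi(r)=i$, the states being generated along the arcs with the Markov property (so the probability of a full assignment $U\colon V\to\{0,1\}$ is $\pi_{U(\rho)}\prod_{(r,s)\in A_T}P(r,s)_{U(r)U(s)}$). The multivariate process $\boldsymbol{\xi}$ assigns to each vertex $v$ the vector $(\xi_1(v),\dots,\xi_k(v))$; its root distribution is $\pi_{\mathbf{i}}=\prod_j\pi^{(j)}_{i_j}$ and its transition probabilities are $\prod_j P^{(j)}(r,s)_{i_jl_j}$. The processes need not be identical, and different arcs may carry different transition matrices. *)

(* Defs.v *)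
From HB Require Import structures.
From mathcomp Require Import all_boot all_order all_algebra.
Set Implicit Arguments. Unset Strict Implicit. Unset Printing Implicit Defensive.
Import Order.TTheory GRing.Theory Num.Theory.
Local Open Scope ring_scope.

(* Finite rooted trees: vertices 'I_n.+1, root ord0, each non-root vertex v
   has a parent [par v] with par v < v.  Arcs are (par v, v), v != ord0.   *)
Definition is_parent_fun (n : nat) (par : 'I_n.+1 -> 'I_n.+1) : Prop :=
  forall v : 'I_n.+1, v != ord0 -> (par v < v)%N.

Definition is_leaf (n : nat) (par : 'I_n.+1 -> 'I_n.+1) (v : 'I_n.+1) : bool :=
  [forall w : 'I_n.+1, (w != ord0) ==> (par w != v)].

Definition stochastic (R : realFieldType) (M : 'M[R]_2) : Prop :=
  (forall i l, 0 <= M i l) /\ (forall i, \sum_(l < 2) M i l = 1).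

Definition mstate (k : nat) := {ffun 'I_k -> 'I_2}.

Definition mroot (R : realFieldType) (k : nat) (pi : 'I_k -> 'I_2 -> R)
  (s : mstate k) : R := \prod_(j < k) pi j (s j).

Definition mtrans (R : realFieldType) (k n : nat)
  (P : 'I_k -> 'I_n.+1 -> 'M[R]_2) (v : 'I_n.+1) (s t : mstate k) : R :=
  \prod_(j < k) P j v (s j) (t j).

(* Probability of a full assignment U : V -> {0,1}^k of the multivariate
   process; P j v is the transition matrix of process j on the arc (par v, v). *)
Definition full_prob (R : realFieldType) (k n : nat)
  (par : 'I_n.+1 -> 'I_n.+1) (pi : 'I_k -> 'I_2 -> R)
  (P : 'I_k -> 'I_n.+1 -> 'M[R]_2) (U : {ffun 'I_n.+1 -> mstate k}) : R :=
  mroot pi (U ord0) * \prod_(v < n.+1 | v != ord0) mtrans P v (U (par v)) (U v).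

(* p(u): probability that xi(v) = u(v) for every v in W (only the values of u
   on W matter). *)
Definition marg_prob (R : realFieldType) (k n : nat)
  (par : 'I_n.+1 -> 'I_n.+1) (pi : 'I_k -> 'I_2 -> R)
  (P : 'I_k -> 'I_n.+1 -> 'M[R]_2) (W : {set 'I_n.+1})
  (u : {ffun 'I_n.+1 -> mstate k}) : R :=
  \sum_(U : {ffun 'I_n.+1 -> mstate k} | [forall v in W, U v == u v])
     full_prob par pi P U.

Definition max2 (a b : 'I_2) : 'I_2 := if (a <= b)%N then b else a.
Definition min2 (a b : 'I_2) : 'I_2 := if (a <= b)%N then a else b.

Definition fjoin (k n : nat) (y z : {ffun 'I_n.+1 -> mstate k})
  : {ffun 'I_n.+1 -> mstate k} :=
  [ffun v => [ffun j => max2 (y v j) (z v j)]].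
Definition fmeet (k n : nat) (y z : {ffun 'I_n.+1 -> mstate k})
  : {ffun 'I_n.+1 -> mstate k} :=
  [ffun v => [ffun j => min2 (y v j) (z v j)]].

(* Main.v *)
Require Import Defs.
From HB Require Import structures.
From mathcomp Require Import all_boot all_order all_algebra.
From mathcomp Require Import ring lra.
Import Order.TTheory GRing.Theory Num.Theory.
Set Implicit Arguments.
Unset Strict Implicit.
Local Open Scope ring_scope.

Lemma key_ineq (R : realFieldType) (a b c d A B C D : R) :
  0 <= a -> 0 <= b -> 0 <= c -> 0 <= d -> 0 <= A -> 0 <= B -> 0 <= C -> 0 <= D ->
  a * c <= A * C -> b * d <= B * D -> a * d <= B * C -> b * c <= B * C ->
  (a + b) * (c + d) <= (A + B) * (C + D).
Proof.
move=> a0 b0 c0 d0 A0 B0 C0 D0 h1 h2 h3 h4.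
have h5 : (a*d)*(b*c) <= (A*D)*(B*C).
  have -> : (a*d)*(b*c) = (a*c)*(b*d) by ring.
  have -> : (A*D)*(B*C) = (A*C)*(B*D) by ring.
  by apply: ler_pM => //; apply: mulr_ge0.
have h6 : 0 <= (B*C - a*d)*(B*C - b*c) by apply: mulr_ge0; rewrite subr_ge0.
have hM : 0 <= B * C by apply: mulr_ge0.
have : a*d + b*c <= B*C + A*D.
  case: (ltrgt0P (B*C)) hM => // [Mp _|M0 _].
    rewrite -(ler_pM2l Mp). nra.
  rewrite M0 in h3 h4; nra.
nra.
Qed.

Lemma det22 (R : comNzRingType) (M : 'M[R]_2) :
  \det M = M ord0 ord0 * M ord_max ord_max - M ord0 ord_max * M ord_max ord0.
Proof.
rewrite (expand_det_row _ ord0) !big_ord_recl big_ord0 /cofactor.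
rewrite !det_mx11 /= !mxE /=.
have e1 : forall i : 'I_1, lift ord0 i = ord_max :> 'I_2 by move=> i; apply/val_inj; rewrite /= (ord1 i).
have e2 : lift (lift ord0 ord0) (0 : 'I_1) = ord0 :> 'I_2 by apply/val_inj.
rewrite e2 !e1 /= expr0 expr1; ring.
Qed.

Lemma I2_cases (x : 'I_2) : x = ord0 \/ x = ord_max.
Proof. by case: x => [[|[|]]] // p; [left|right]; apply/val_inj. Qed.

Lemma I2_neq0 (x : 'I_2) : (x != ord0) = (x == ord_max).
Proof. by case: (I2_cases x) => ->. Qed.

Lemma tp2 (R : realFieldType) (M : 'M[R]_2) : 0 <= \det M ->
  forall a1 a2 b1 b2 : 'I_2,
  M a1 b1 * M a2 b2 <= M (max2 a1 a2) (max2 b1 b2) * M (min2 a1 a2) (min2 b1 b2).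
Proof.
rewrite det22 subr_ge0 => hd a1 a2 b1 b2.
case: (I2_cases a1) => ->; case: (I2_cases a2) => ->;
case: (I2_cases b1) => ->; case: (I2_cases b2) => ->;
rewrite /max2 /min2 /=; try lra.
Qed.

Section MTP.
Variables (R : realFieldType) (n k : nat).
Notation L := {ffun 'I_n.+1 -> mstate k}.

Definition mtp2 (f : L -> R) :=
  (forall x, 0 <= f x) /\
  (forall x y, f x * f y <= f (fjoin x y) * f (fmeet x y)).

Lemma mtp2_mul f g : mtp2 f -> mtp2 g -> mtp2 (fun x => f x * g x).
Proof.
move=> [f0 fi] [g0 gi]; split=> [x|x y]; first by apply: mulr_ge0.
have -> : f x * g x * (f y * g y) = (f x * f y) * (g x * g y) by ring.
have -> : f (fjoin x y) * g (fjoin x y) * (f (fmeet x y) * g (fmeet x y))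
  = (f (fjoin x y) * f (fmeet x y)) * (g (fjoin x y) * g (fmeet x y)) by ring.
by apply: ler_pM => //; apply: mulr_ge0.
Qed.

Lemma mtp2_prod (I : finType) (Pr : pred I) (F : I -> L -> R) :
  (forall i, Pr i -> mtp2 (F i)) -> mtp2 (fun x => \prod_(i | Pr i) F i x).
Proof.
move=> H; split=> [x|x y]; first by apply: prodr_ge0 => i /H [].
rewrite -!big_split /=; apply: ler_prod => i Pi.
have [h0 hi] := H i Pi.
by rewrite mulr_ge0 ?hi.
Qed.

Lemma fjoinE (x y : L) v j : fjoin x y v j = max2 (x v j) (y v j).
Proof. by rewrite /fjoin !ffunE. Qed.
Lemma fmeetE (x y : L) v j : fmeet x y v j = min2 (x v j) (y v j).
Proof. by rewrite /fmeet !ffunE. Qed.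

Lemma mtp2_coord1 (phi : 'I_2 -> R) v j : (forall i, 0 <= phi i) ->
  mtp2 (fun x => phi (x v j)).
Proof.
move=> H; split=> // x y; rewrite fjoinE fmeetE /max2 /min2.
by case: ifP => _; rewrite // mulrC.
Qed.

Lemma mtp2_coord2 (M : 'M[R]_2) v1 j1 v2 j2 : (forall i l, 0 <= M i l) ->
  0 <= \det M -> mtp2 (fun x => M (x v1 j1) (x v2 j2)).
Proof.
move=> H hd; split=> // x y; rewrite !fjoinE !fmeetE; exact: tp2.
Qed.

Definition upd (u : L) (c : 'I_n.+1 * 'I_k) (i : 'I_2) : L :=
  [ffun v => [ffun j => if (v, j) == c then i else u v j]].

Lemma fjoin_upd x y c i l : fjoin (upd x c i) (upd y c l) = upd (fjoin x y) c (max2 i l).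
Proof.
apply/ffunP => v; apply/ffunP => j; rewrite fjoinE !ffunE ?fjoinE.
by case: ifP.
Qed.
Lemma fmeet_upd x y c i l : fmeet (upd x c i) (upd y c l) = upd (fmeet x y) c (min2 i l).
Proof.
apply/ffunP => v; apply/ffunP => j; rewrite fmeetE !ffunE ?fmeetE.
by case: ifP.
Qed.

Lemma mtp2_marg c h : mtp2 h ->
  mtp2 (fun u => h (upd u c ord0) + h (upd u c ord_max)).
Proof.
move=> [h0 hi]; split=> [x|x y]; first by apply: addr_ge0.
apply: key_ineq => //.
- by have := hi (upd x c ord0) (upd y c ord0); rewrite fjoin_upd fmeet_upd.
- by have := hi (upd x c ord_max) (upd y c ord_max); rewrite fjoin_upd fmeet_upd.
- by have := hi (upd x c ord0) (upd y c ord_max); rewrite fjoin_upd fmeet_upd.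
- by have := hi (upd x c ord_max) (upd y c ord0); rewrite fjoin_upd fmeet_upd.
Qed.

Fixpoint gmarg (h : L -> R) (cs : seq ('I_n.+1 * 'I_k)) (u : L) : R :=
  match cs with
  | [::] => h u
  | c :: cs' => gmarg h cs' (upd u c ord0) + gmarg h cs' (upd u c ord_max)
  end.

Lemma mtp2_gmarg h cs : mtp2 h -> mtp2 (gmarg h cs).
Proof.
move=> H; elim: cs => [|c cs IH] //=.
change (mtp2 (fun u => gmarg h cs (upd u c ord0) + gmarg h cs (upd u c ord_max))).
exact: (mtp2_marg c IH).
Qed.

Definition agree (cs : seq ('I_n.+1 * 'I_k)) (u U : L) : bool :=
  [forall c : 'I_n.+1 * 'I_k, (c \notin cs) ==> (U c.1 c.2 == u c.1 c.2)].

Lemma agree_upd c cs u i U : c \notin cs ->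
  agree (c :: cs) u U && (U c.1 c.2 == i) = agree cs (upd u c i) U.
Proof.
move=> ncs; apply/idP/idP.
- move=> /andP[/forallP H e]; apply/forallP => [[v j]]; apply/implyP => nc /=.
  rewrite !ffunE; case: ((v, j) =P c) => [E|ne]; first by rewrite -E in e.
  have := H (v, j); rewrite inE negb_or nc andbT /= => /implyP; apply.
  by apply/eqP => E; apply: ne; rewrite E.
- move/forallP => H; apply/andP; split.
    apply/forallP => [[v j]]; apply/implyP; rewrite inE negb_or => /andP[ne nc].
    by have := H (v, j); rewrite nc /= !ffunE (negbTE ne).
  have := H c; rewrite ncs /= !ffunE.
  by case: c {H ncs} => v j /=; rewrite eqxx.
Qed.

Lemma gmarg_sum h cs u : uniq cs ->
  gmarg h cs u = \sum_(U | agree cs u U) h U.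
Proof.
elim: cs u => [|c cs IH] u /=.
  move=> _; rewrite (big_pred1 u) // => U /=.
  apply/forallP/eqP => [H|->].
    by apply/ffunP => v; apply/ffunP => j; apply/eqP; exact: (H (v, j)).
  by move=> x; rewrite implyTb.
move=> /andP[ncs ucs].
rewrite (bigID (fun U : L => U c.1 c.2 == ord0)) /= !IH //.
congr (_ + _); apply: eq_bigl => U.
  by rewrite agree_upd.
by rewrite I2_neq0 agree_upd.
Qed.

End MTP.

Theorem proposition2p1 (R : realFieldType) (n k : nat)
  (par : 'I_n.+1 -> 'I_n.+1) (pi : 'I_k -> 'I_2 -> R)
  (P : 'I_k -> 'I_n.+1 -> 'M[R]_2) (W : {set 'I_n.+1})
  (y z : {ffun 'I_n.+1 -> mstate k}) :
  is_parent_fun par ->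
  (forall j i, 0 < pi j i) ->
  (forall j, \sum_(i < 2) pi j i = 1) ->
  (forall j (v : 'I_n.+1), v != ord0 -> stochastic (P j v)) ->
  (forall j (v : 'I_n.+1), v != ord0 -> 0 <= \det (P j v)) ->
  W != set0 ->
  (forall v, v \in W -> is_leaf par v) ->
  marg_prob par pi P W y * marg_prob par pi P W z <=
    marg_prob par pi P W (fjoin y z) * marg_prob par pi P W (fmeet y z).
Proof.
move=> _ hpi _ hP hdet _ _.
have hfull : mtp2 (full_prob par pi P).
  apply: mtp2_mul.
    apply: mtp2_prod => j _; apply: mtp2_coord1 => i; exact: ltW.
  apply: mtp2_prod => v nv; apply: mtp2_prod => j _.
  apply: mtp2_coord2; last exact: hdet.
  by have [] := hP j v nv.
set cs := enum [pred c : 'I_n.+1 * 'I_k | c.1 \notin W].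
have E : forall u, marg_prob par pi P W u = gmarg (full_prob par pi P) cs u.
  move=> u; rewrite gmarg_sum ?enum_uniq //; apply: eq_bigl => U.
  apply/forallP/forallP => H.
    move=> [v j]; apply/implyP; rewrite mem_enum inE negbK /= => vW.
    by have /implyP/(_ vW)/eqP -> := H v.
  move=> v; apply/implyP => vW; apply/eqP/ffunP => j; apply/eqP.
  by have := H (v, j); rewrite mem_enum inE negbK /= vW.
rewrite !E; exact: (mtp2_gmarg cs hfull).2.
Qed.
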